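(* Let $M_I$ and $N_J$ be factor systems and assume Condition (D). For all $\zeta,\zeta'\in\mathrm{elem}([M_I\to N_J])$: if $\zeta(\alpha)=\zeta'(\alpha)$ for all $\alpha\in\mathrm{elem}(M_I)$, then $\zeta=\zeta'$.
   Context: For every non-empty directed preordered set $I$ a family $\mathcal F(I)$ of subsets of $I$ is fixed such that every member is cofinal, $\mathcal F(I)$ is closed under supersets and finite intersections, and it contains every non-empty upward closed subset. Condition (D): for all such $I,J$, if $H\in\mathcal F(I\times J)$ (product order) and $I'\in\mathcal F(I)$, then $H[I']:=\{j\in J\mid\exists i\in I',\ (i,j)\in H\}\in\mathcal F(J)$. A system $(M_I,\triangleright)$: pairwise disjoint sets $M_i$ with relations $\triangleright\subseteq M_{i'}\times M_i$ ($i\le i'$), reflexive for $i=i'$; $a_i\approx b_j$ iff some $c\in M_{i'}$, $i'\ge i,j$, has $c\triangleright a_i$, $c\triangleright b_j$; prefactor system: $a_{i'}\approx a_i\iff a_{i'}\triangleright a_i$. A factor system is a prefactor system with $\approx$-preserving maps $emb_{i,i'}:M_i\to M_{i'}$, $proj_{i',i}:M_{i'}\to M_i$ ($i\le i'$) such that $emb_{i,i}(a)\approx a$, $proj_{i,i}(a)\approx a$, $emb_{i',i''}(emb_{i,i'}(a))\approx emb_{i,i''}(a)$, $proj_{i',i}(proj_{i'',i'}(a))\approx proj_{i'',i}(a)$, $proj_{i',i}(emb_{i,i'}(a))\approx a$, and for $i\le i'\le i''$: $a_{i'}\triangleright a_i\Rightarrow emb_{i',i''}(a_{i'})\triangleright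 a_i$ and $a_{i''}\triangleright a_i\Rightarrow proj_{i'',i'}(a_{i''})\triangleright a_i$. The function space $[M_I\to N_J]$ is indexed by $I\times J$ (indices written $i\to j$), with states $[M_i\to N_j]$ = all $\approx$-preserving functions $M_i\to N_j$, and $f'\triangleright f$ (for $i\to j\le i'\to j'$) iff $a_{i'}\triangleright a_i$ implies $f'(a_{i'})\triangleright f(a_i)$; embeddings $f\mapsto emb_{j,j'}\circ f\circ proj_{i',i}$, projections $f'\mapsto proj_{j',j}\circ f'\circ emb_{i,i'}$. A consistent set in a system is $\alpha\subseteq\bigcup_iM_i$ such that $a_{i'}\triangleright a_i$ for all $a_{i'},a_i\in\alpha$ with $i'\ge i$, and $\{i\mid\alpha\cap M_i\ne\emptyset\}\in\mathcal F(I)$; $\mathrm{elem}(M_I)$ is the set of inclusion-maximal consistent sets. For a consistent set $\zeta$ of $[M_I\to N_J]$ and a consistent set $\alpha$ of $M_I$, $\zeta(\alpha):=\{f(a_i)\mid f\in\zeta\cap[M_i\to N_j]\text{ for some }j,\ a_i\in\alpha\cap M_i\}$. *)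

(* Defs.v *)
Record DirSet := {
  dcar :> Type;
  dle : dcar -> dcar -> Prop;
  dle_refl : forall i, dle i i;
  dle_trans : forall i j k, dle i j -> dle j k -> dle i k;
  d_nonempty : exists i : dcar, True;
  d_directed : forall i j, exists k, dle i k /\ dle j k
}.
Arguments dle {d} _ _.

Definition prodD (I J : DirSet) : DirSet.
Proof.
  refine {| dcar := (dcar I * dcar J)%type;
            dle := fun p q => dle (fst p) (fst q) /\ dle (snd p) (snd q) |}.
  - intros [i j]; split; apply dle_refl.
  - intros [i j] [i' j'] [i'' j''] [H1 H2] [H3 H4]; split; eapply dle_trans; eauto.
  - destruct (d_nonempty I) as [i _]; destruct (d_nonempty J) as [j _].
    exists (i, j); exact Logic.I.
  - intros [i j] [i' j'].
    destruct (d_directed I i i') as [k [Hk1 Hk2]].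
    destruct (d_directed J j j') as [l [Hl1 Hl2]].
    exists (k, l); simpl; tauto.
Defined.

Definition Fam := forall D : DirSet, (dcar D -> Prop) -> Prop.

Definition cofinal (D : DirSet) (H : D -> Prop) : Prop :=
  forall i : D, exists i', dle i i' /\ H i'.

Definition Fam_ok (F : Fam) : Prop :=
  (forall (D : DirSet) H, F D H -> cofinal D H) /\
  (forall (D : DirSet) (H H' : D -> Prop), F D H -> (forall i, H i -> H' i) -> F D H') /\
  (forall (D : DirSet) (H H' : D -> Prop), F D H -> F D H' -> F D (fun i => H i /\ H' i)) /\
  (forall (D : DirSet) (H : D -> Prop), (exists i, H i) ->
       (forall i i', H i -> dle i i' -> H i') -> F D H).

Definition condD (F : Fam) : Prop :=
  forall (I J : DirSet) (H : prodD I J -> Prop) (I' : I -> Prop),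
    F (prodD I J) H -> F I I' ->
    F J (fun j => exists i, I' i /\ H (i, j)).

(** A system over D: pairwise disjoint state sets (a dependent family, so
    disjointness is automatic) with relations tri i' i  (meaningful for i <= i'). *)
Record System (D : DirSet) := {
  st : D -> Type;
  tri : forall i' i : D, st i' -> st i -> Prop
}.
Arguments st {D} _ _.
Arguments tri {D} _ {i' i} _ _.

Definition is_system {D} (S : System D) : Prop :=
  forall i (a : st S i), tri S a a.

Definition approx {D} (S : System D) {i j : D} (a : st S i) (b : st S j) : Prop :=
  exists (i' : D) (c : st S i'), dle i i' /\ dle j i' /\ tri S c a /\ tri S c b.

Definition is_prefactor {D} (S : System D) : Prop :=
  is_system S /\
  forall (i i' : D) (a' : st S i') (a : st S i), dle i i' ->
    (approx S a' a <-> tri S a' a).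

Definition approx_pres {D E} (S : System D) (T : System E) {i : D} {j : E}
  (f : st S i -> st T j) : Prop :=
  forall a b : st S i, approx S a b -> approx T (f a) (f b).

Record FactorSystem (D : DirSet) := {
  fs_sys :> System D;
  emb : forall i i' : D, dle i i' -> st fs_sys i -> st fs_sys i';
  proj : forall i i' : D, dle i i' -> st fs_sys i' -> st fs_sys i;
  fs_prefactor : is_prefactor fs_sys;
  emb_pres : forall i i' (h : dle i i'), approx_pres fs_sys fs_sys (emb i i' h);
  proj_pres : forall i i' (h : dle i i'), approx_pres fs_sys fs_sys (proj i i' h);
  emb_id : forall i (h : dle i i) a, approx fs_sys (emb i i h a) a;
  proj_id : forall i (h : dle i i) a, approx fs_sys (proj i i h a) a;
  emb_comp : forall i i' i'' (h1 : dle i i') (h2 : dle i' i'') (h3 : dle i i'') a,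
      approx fs_sys (emb i' i'' h2 (emb i i' h1 a)) (emb i i'' h3 a);
  proj_comp : forall i i' i'' (h1 : dle i i') (h2 : dle i' i'') (h3 : dle i i'') a,
      approx fs_sys (proj i i' h1 (proj i' i'' h2 a)) (proj i i'' h3 a);
  proj_emb : forall i i' (h1 h2 : dle i i') a,
      approx fs_sys (proj i i' h2 (emb i i' h1 a)) a;
  emb_tri : forall i i' i'' (h1 : dle i i') (h2 : dle i' i'')
      (a' : st fs_sys i') (a : st fs_sys i),
      tri fs_sys a' a -> tri fs_sys (emb i' i'' h2 a') a;
  proj_tri : forall i i' i'' (h1 : dle i i') (h2 : dle i' i'')
      (a'' : st fs_sys i'') (a : st fs_sys i),
      tri fs_sys a'' a -> tri fs_sys (proj i' i'' h2 a'') a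
}.
Arguments fs_sys {D} _.

(** Function space [M_I -> N_J] (only its system structure is needed):
    indexed by I x J, states at (i,j) are the approx-preserving maps
    M_i -> N_j, and f' |> f iff a' |> a implies f' a' |> f a. *)
Definition fun_state {I J} (M : System I) (N : System J) (p : prodD I J) : Type :=
  { f : st M (fst p) -> st N (snd p) | approx_pres M N f }.

Definition FunSpace {I J} (M : System I) (N : System J) : System (prodD I J) :=
  {| st := fun_state M N;
     tri := fun p' p (f' : fun_state M N p') (f : fun_state M N p) =>
       forall (a' : st M (fst p')) (a : st M (fst p)),
         tri M a' a -> tri N (proj1_sig f' a') (proj1_sig f a) |}.

Definition elt {D} (S : System D) : Type := { i : D & st S i }.

Definition consistent (F : Fam) {D} (S : System D) (al : elt S -> Prop) : Prop :=
  (forall x y : elt S, al x -> al y -> dle (projT1 y) (projT1 x) ->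
       tri S (projT2 x) (projT2 y)) /\
  F D (fun i => exists a : st S i, al (existT _ i a)).

Definition is_elem (F : Fam) {D} (S : System D) (al : elt S -> Prop) : Prop :=
  consistent F S al /\
  forall be : elt S -> Prop, consistent F S be ->
    (forall x, al x -> be x) -> forall x, be x -> al x.

Definition app {I J} {M : System I} {N : System J}
  (ze : elt (FunSpace M N) -> Prop) (al : elt M -> Prop) : elt N -> Prop :=
  fun x => exists (i : I) (j : J) (f : fun_state M N (i, j)) (a : st M i),
    ze (existT _ (i, j) f) /\ al (existT _ i a) /\
    x = existT _ j (proj1_sig f a).

(* Main.v *)
Require Import Defs.
From Stdlib Require Import Classical.
From mathcomp Require classical_sets.
From mathcomp Require classical_sets.
Lemma extend (F : Fam) (Fsup : forall (D : DirSet) (H H' : D -> Prop), F D H -> (forall i, H i -> H' i) -> F D H')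
  {D} (S : System D) (b0 : elt S -> Prop) :
  consistent F S b0 -> exists al, is_elem F S al /\ forall x, b0 x -> al x.
Proof.
  intros Hb0.
  destruct (@classical_sets.Zorn_bigcup (elt S) (fun (X : elt S -> Prop) => consistent F S (fun x => X x \/ b0 x))) as [A [PA Amax]].
  - intros Fm FP Ftot. split.
    + intros x y Hx Hy. unfold classical_sets.bigcup in Hx, Hy. cbn in Hx, Hy.
      destruct Hx as [[X FX Xx]|bx]; destruct Hy as [[Y FY Yy]|by_].
      * destruct (Ftot X Y FX FY) as [XY|YX].
        -- apply (proj1 (FP Y FY)); [left; apply XY; exact Xx| left; exact Yy].
        -- apply (proj1 (FP X FX)); [left; exact Xx| left; apply YX; exact Yy].
      * apply (proj1 (FP X FX)); auto.
      * apply (proj1 (FP Y FY)); auto.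
      * apply (proj1 Hb0); auto.
    + eapply Fsup. apply (proj2 Hb0). intros i [a Ha]. exists a; auto.
  - exists (fun x => A x \/ b0 x). split; [split|].
    + exact PA.
    + intros be Hbe Hsub x Hx. apply NNPP; intro Hn.
      apply (Amax be).
      * split. intros y Ay. apply Hsub; auto.
        intro Hc. apply Hn. left. apply Hc. exact Hx.
      * split.
        -- intros y z [Hy|Hy] [Hz|Hz]; apply (proj1 Hbe); auto.
        -- eapply Fsup. apply (proj2 Hbe). intros i [a Ha]. exists a; auto.
    + auto.
Qed.

Section Pre.
Context {D : DirSet} (S : System D) (Hpre : is_prefactor S).

Lemma tri_common i j k (x : st S i) (y : st S j) (c : st S k) :
  dle i k -> dle j k -> dle j i -> tri S c x -> tri S c y -> tri S x y.
Proof.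
  intros Hik Hjk Hji Hcx Hcy. apply (proj2 Hpre j i x y Hji).
  exists k, c; auto.
Qed.

Lemma tri_sym i j (x : st S i) (y : st S j) :
  dle j i -> dle i j -> tri S x y -> tri S y x.
Proof.
  intros Hji Hij Hxy. apply (proj2 Hpre j i x y Hji) in Hxy.
  destruct Hxy as [k [c [H1 [H2 [H3 H4]]]]].
  apply (proj2 Hpre i j y x Hij). exists k, c; auto.
Qed.
End Pre.

Lemma elem_contains (F : Fam) (HF : Fam_ok F) {I : DirSet} (M : FactorSystem I)
  i i' (a : st M i) (a' : st M i') :
  dle i i' -> tri M a' a ->
  exists al, is_elem F M al /\ al (existT _ i a) /\ al (existT _ i' a').
Proof.
  intros Hii' Ht.
  destruct HF as [Hcof [Hsup [Hint Hup]]].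
  pose proof (fs_prefactor _ M) as Hpre.
  assert (Hrefl : forall k (x : st M k), tri M x x) by apply (proj1 Hpre).
  assert (Hsym : forall k l (x : st M k) (y : st M l), dle l k -> tri M x y -> dle k l -> tri M y x).
  { intros k l x y H1 H2 H3. eapply tri_sym; eauto. }
  assert (Hea' : forall k h, tri M (emb _ M i' k h a') a').
  { intros k h. eapply emb_tri; [apply dle_refl|]. apply Hrefl. }
  assert (Hea : forall k h, tri M (emb _ M i' k h a') a).
  { intros k h. eapply emb_tri; eauto. }
  assert (Hee : forall k k' h h', dle k k' -> tri M (emb _ M i' k' h' a') (emb _ M i' k h a')).
  { intros k k' h h' Hkk'.
    set (e := emb _ M i' k h a'). set (e' := emb _ M i' k' h' a').
    set (e'' := emb _ M k k' Hkk' e).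
    assert (T1 : tri M e'' e).
    { unfold e''. eapply emb_tri; [apply dle_refl|]. apply Hrefl. }
    assert (T2 : tri M e'' e').
    { apply (proj2 Hpre k' k' e'' e' (dle_refl _ _)).
      unfold e'', e'. apply emb_comp. }
    eapply tri_common; eauto. apply dle_refl. }
  destruct (extend F Hsup M (fun x => x = existT _ i a \/ x = existT _ i' a' \/
     exists k h, x = existT _ k (emb _ M i' k h a'))) as [al [Hal Hsub]].
  - split.
    + intros x y Hx Hy Hyx.
      destruct Hx as [->|[->|[k [h ->]]]]; destruct Hy as [->|[->|[k' [h' ->]]]]; simpl in *.
      * apply Hrefl.
      * apply Hsym; auto.
      * apply Hsym; auto. eapply dle_trans; eauto.
      * auto.
      * apply Hrefl.
      * apply Hsym; auto.
      * auto.
      * auto.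
      * apply Hee; auto.
    + eapply Hsup. apply (Hup _ (fun k => dle i' k)).
      * exists i'. apply dle_refl.
      * intros k k' H1 H2. eapply dle_trans; eauto.
      * intros k Hk. exists (emb _ M i' k Hk a'). right; right. exists k, Hk. reflexivity.
  - exists al. split; auto.
Qed.

Lemma app_tri (F : Fam) (HF : Fam_ok F) (HD : condD F)
  (I J : DirSet) (M : System I) (N : System J) (HN : is_prefactor N)
  (ze : elt (FunSpace M N) -> Prop) (al : elt M -> Prop) :
  consistent F (FunSpace M N) ze -> consistent F M al ->
  forall x y, app ze al x -> app ze al y -> dle (projT1 y) (projT1 x) ->
  tri N (projT2 x) (projT2 y).
Proof.
  intros [Zc ZF] [Ac AF] x y [k [l [g [b [Hg [Hb ->]]]]]] [k' [l' [g' [b' [Hg' [Hb' ->]]]]]]; simpl.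
  intro Hll.
  destruct HF as [Hcof [Hsup [Hint Hup]]].
  destruct (d_directed I k k') as [k0 [Hk Hk']].
  pose (H := fun p : prodD I J => (exists f, ze (existT _ p f)) /\ @dle (prodD I J) (k0, l) p).
  pose (I' := fun i : I => (exists a, al (existT _ i a)) /\ dle k0 i).
  assert (FH : F (prodD I J) H).
  { apply Hint; auto. apply Hup. exists (k0, l). apply dle_refl.
    intros p p' H1 H2. eapply dle_trans; eauto. }
  assert (FI : F I I').
  { apply Hint; auto. apply Hup. exists k0. apply dle_refl.
    intros p p' H1 H2. eapply dle_trans; eauto. }
  destruct (Hcof _ _ (HD I J H I' FH FI) l) as [j [Hlj [i [[[b'' Hb''] Hki] [[g'' Hg''] [_ Hlj']]]]]].
  simpl in *.
  assert (T1 : tri N (proj1_sig g'' b'') (proj1_sig g b)).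
  { assert (Hd : @dle (prodD I J) (projT1 (existT (fun p => fun_state M N p) _ g)) (projT1 (existT (fun p => fun_state M N p) _ g''))).
    { simpl. split; try (eapply dle_trans; eauto); apply dle_refl. }
    pose proof (Zc _ _ Hg'' Hg Hd) as Hz. simpl in Hz. apply Hz.
    apply (Ac _ _ Hb'' Hb). simpl. eapply dle_trans; eauto. }
  assert (T2 : tri N (proj1_sig g'' b'') (proj1_sig g' b')).
  { assert (Hd : @dle (prodD I J) (projT1 (existT (fun p => fun_state M N p) _ g')) (projT1 (existT (fun p => fun_state M N p) _ g''))).
    { simpl. split; try (eapply dle_trans; eauto); apply dle_refl. }
    pose proof (Zc _ _ Hg'' Hg' Hd) as Hz. simpl in Hz. apply Hz.
    apply (Ac _ _ Hb'' Hb'). simpl. eapply dle_trans; eauto. }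
  eapply tri_common; eauto. eapply dle_trans; eauto.
Qed.

Lemma one_dir (F : Fam) (HF : Fam_ok F) (HD : condD F)
  (I J : DirSet) (M : FactorSystem I) (N : FactorSystem J)
  (ze ze' : elt (FunSpace M N) -> Prop) :
  is_elem F (FunSpace M N) ze ->
  is_elem F (FunSpace M N) ze' ->
  (forall al : elt M -> Prop, is_elem F M al ->
     forall x, app ze al x <-> app ze' al x) ->
  forall z, ze z -> ze' z.
Proof.
  intros [Zc Zm] [Zc' Zm'] Happ z Hz.
  pose proof HF as [Hcof [Hsup [Hint Hup]]].
  apply (Zm' (fun x => ze x \/ ze' x)); auto.
  split.
  - assert (K : forall x y, (ze x \/ ze' x) -> (ze y \/ ze' y) ->
       dle (projT1 y) (projT1 x) -> tri (FunSpace M N) (projT2 x) (projT2 y)).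
    { intros [[i' j'] g] [[i j] f] Hx Hy [Hii' Hjj']. simpl in *.
      intros a' a Ha.
      destruct (elem_contains F HF M i i' a a' Hii' Ha) as [al [Hal [Ha1 Ha2]]].
      assert (Ax : app ze al (existT _ j' (proj1_sig g a'))).
      { destruct Hx as [Hx|Hx]; [|apply Happ; auto]; exists i', j', g, a'; auto. }
      assert (Ay : app ze al (existT _ j (proj1_sig f a))).
      { destruct Hy as [Hy|Hy]; [|apply Happ; auto]; exists i, j, f, a; auto. }
      exact (app_tri F HF HD I J M N (fs_prefactor _ N) ze al Zc (proj1 Hal) _ _ Ax Ay Hjj'). }
    exact K.
  - eapply Hsup. apply (proj2 Zc'). intros p [f Hf]. exists f; auto.
Qed.

Theorem lemma2p13 (F : Fam) (HF : Fam_ok F) (HD : condD F)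
  (I J : DirSet) (M : FactorSystem I) (N : FactorSystem J)
  (ze ze' : elt (FunSpace M N) -> Prop) :
  is_elem F (FunSpace M N) ze ->
  is_elem F (FunSpace M N) ze' ->
  (forall al : elt M -> Prop, is_elem F M al ->
     forall x, app ze al x <-> app ze' al x) ->
  forall z, ze z <-> ze' z.
Proof.
  intros H1 H2 H3 z. split.
  - apply (one_dir F HF HD I J M N ze ze'); auto.
  - apply (one_dir F HF HD I J M N ze' ze); auto. intros al Hal x. symmetry. apply H3; auto.
Qed.
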